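(* Let $\mathfrak{C}=(U,M,I,N,J)$ be a formal decision context. Then the set of necessary I-decision rules of $\mathfrak{C}$ is $$\overline{\mathfrak{R}}_{I}(\mathfrak{C})=\{(O^{\square_M\lozenge_M},O^{\square_M})\rightarrow(\cap[O]_{R_2},(\cap[O]_{R_2})^{\uparrow_N})\mid O\in\mathrm{Ext}L(\mathfrak{C}_N),\ O\ne U,\ O^{\square_M\lozenge_M}\neq\emptyset\}.$$
   Context: Formal context $(U,M,I)$: $U$ and $M$ are finite nonempty sets and $I\subseteq U\times M$. For $O\subseteq U$ and $C\subseteq M$ define: - $O^{\uparrow}=\{a\in M\mid \forall x\in O\,((x,a)\in I)\}$ and $C^{\downarrow}=\{x\in U\mid \forall a\in C\,((x,a)\in I)\}$; - $O^{\square}=\{a\in M\mid \forall x\in U\,((x,a)\in I\Rightarrow x\in O)\}$ and $C^{\lozenge}=\{x\in U\mid \exists a\in C\,((x,a)\in I)\}$. A formal concept is a pair $(O,C)$ with $O^\uparrow=C$ and $C^\downarrow=O$ (set $L$). An object-oriented concept is a pair $(O,C)$ with $O^\square=C$ and $C^\lozenge=O$ (set $L_O$). $\mathrm{Ext}$ denotes the set of extents. Standing assumption: contexts are canonical, i.e. for all $x\in U$ and $a\in M$ we have $\{x\}^\uparrow\notin\{\emptyset,M\}$ and $\{a\}^\downarrow\notin\{\emptyset,U\}$. A formal decision context $\mathfrak{C}=(U,M,I,N,J)$ has conditional context $\mathfrak{C}_M=(U,M,I)$ and decision context $\mathfrak{C}_N=(U,N,J)$, with $M\cap N=\emptyset$.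 Operators carry the subscript $M$ or $N$ according to the context in which they are computed. An I-decision rule is $(O,C)\rightarrow(Y,D)$ with $(O,C)\in L_O(\mathfrak{C}_M)$, $(Y,D)\in L(\mathfrak{C}_N)$, $O\subseteq Y$, $O\ne\emptyset$ and $Y\ne U$; the set of these is $\mathfrak{R}_I(\mathfrak{C})$. Implication: $(O_1,C_1)\rightarrow(Y_1,D_1)\Rightarrow(O_2,C_2)\rightarrow(Y_2,D_2)$ iff $O_2\subseteq O_1\subseteq Y_1\subseteq Y_2$. A rule $r$ is necessary if there is no $r_1\in\mathfrak{R}_I(\mathfrak{C})$ with $r_1\ne r$ and $r_1\Rightarrow r$. $R_2$ is the equivalence relation on $\mathrm{Ext}L(\mathfrak{C}_N)$ given by $(O,Y)\in R_2$ iff $O^{\square_M}=Y^{\square_M}$. $[O]_{R_2}$ is the class of $O$, and $\cap[O]_{R_2}$ is the intersection of its members. *)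

(* Defs.v *)
From mathcomp Require Import all_boot all_order.
Set Implicit Arguments. Unset Strict Implicit. Unset Printing Implicit Defensive.

Section Ops.
Variables (U M : finType) (I : U -> M -> bool).

Definition up (O : {set U}) : {set M} := [set a | [forall x in O, I x a]].
Definition down (C : {set M}) : {set U} := [set x | [forall a in C, I x a]].
Definition box (O : {set U}) : {set M} := [set a | [forall x, I x a ==> (x \in O)]].
Definition dia (C : {set M}) : {set U} := [set x | [exists a in C, I x a]].

Definition is_concept (O : {set U}) (C : {set M}) : Prop := up O = C /\ down C = O.
Definition is_oconcept (O : {set U}) (C : {set M}) : Prop := box O = C /\ dia C = O.

Definition is_extent (O : {set U}) : Prop := exists C, is_concept O C.

Definition canonical : Prop :=
  (forall x : U, up [set x] != set0 /\ up [set x] != setT) /\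
  (forall a : M, down [set a] != set0 /\ down [set a] != setT).
End Ops.

Section Decision.
Variables (U M N : finType) (I : U -> M -> bool) (J : U -> N -> bool).

(* A rule (O,C) -> (Y,D) is represented by the quadruple (O, C, Y, D). *)
Definition rule := ({set U} * {set M} * {set U} * {set N})%type.

Definition is_Irule (r : rule) : Prop :=
  let: (Ob, C, Y, D) := r return Prop in
  is_oconcept I Ob C /\ is_concept J Y D /\ Ob \subset Y /\ Ob != set0 /\ Y != setT.

Definition rule_implies (r1 r2 : rule) : Prop :=
  let: (O1, C1, Y1, D1) := r1 return Prop in
  let: (O2, C2, Y2, D2) := r2 return Prop in
  O2 \subset O1 /\ O1 \subset Y1 /\ Y1 \subset Y2.

Definition necessary (r : rule) : Prop :=
  is_Irule r /\ ~ exists r1, [/\ is_Irule r1, r1 <> r & rule_implies r1 r].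

Definition R2class (O : {set U}) : {set {set U}} :=
  [set Y : {set U} | down J (up J Y) == Y & box I Y == box I O].

Definition capR2 (O : {set U}) : {set U} := \bigcap_(Y in R2class O) Y.
End Decision.

(* Main.v *)
Require Import Defs.
From mathcomp Require Import all_boot all_order.

Section L.
Variables (U M : finType) (I : U -> M -> bool).

Lemma box_mono (A B : {set U}) : A \subset B -> box I A \subset box I B.
Proof.
move=> /subsetP AB; apply/subsetP=> a; rewrite !inE => /forallP H.
apply/forallP=> x; apply/implyP=> Ix; apply: AB; exact: (implyP (H x)).
Qed.

Lemma dia_mono (A B : {set M}) : A \subset B -> dia I A \subset dia I B.
Proof.
move=> /subsetP AB; apply/subsetP=> x; rewrite !inE => /existsP [a /andP [aA Ia]].
apply/existsP; exists a; rewrite Ia andbT; exact: AB.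
Qed.

Lemma galois (C : {set M}) (X : {set U}) :
  (dia I C \subset X) = (C \subset box I X).
Proof.
apply/idP/idP.
- move=> /subsetP H; apply/subsetP=> a aC; rewrite inE; apply/forallP=> x.
  apply/implyP=> Ixa; apply: H; rewrite inE; apply/existsP; exists a; by rewrite aC.
- move=> /subsetP H; apply/subsetP=> x; rewrite inE => /existsP [a /andP [aC Ixa]].
  have := H a aC; rewrite inE => /forallP /(_ x); by rewrite Ixa.
Qed.

Lemma dia_box_sub (X : {set U}) : dia I (box I X) \subset X.
Proof. by rewrite galois. Qed.

Lemma box_dia_box (X : {set U}) : box I (dia I (box I X)) = box I X.
Proof.
apply/eqP; rewrite eqEsubset box_mono ?dia_box_sub //= -galois //.
Qed.

Lemma up_anti (A B : {set U}) : A \subset B -> up I B \subset up I A.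
Proof.
move=> /subsetP AB; apply/subsetP=> a; rewrite !inE => /forall_inP H.
apply/forall_inP=> x xA; exact: H (AB x xA).
Qed.

Lemma down_anti (A B : {set M}) : A \subset B -> down I B \subset down I A.
Proof.
move=> /subsetP AB; apply/subsetP=> x; rewrite !inE => /forall_inP H.
apply/forall_inP=> a aA; exact: H (AB a aA).
Qed.

Lemma down_up_ext (A : {set U}) : A \subset down I (up I A).
Proof.
apply/subsetP=> x xA; rewrite inE; apply/forall_inP=> a; rewrite inE.
by move=> /forall_inP; apply.
Qed.

Lemma extI (A B : {set U}) : down I (up I A) = A -> down I (up I B) = B ->
  down I (up I (A :&: B)) = A :&: B.
Proof.
move=> eA eB; apply/eqP; rewrite eqEsubset down_up_ext andbT subsetI.
by rewrite -{2}eA -{3}eB !down_anti // up_anti // ?subsetIl ?subsetIr.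
Qed.
End L.

Section M.
Variables (U M N : finType) (I : U -> M -> bool) (J : U -> N -> bool).

Lemma capR2_props (O : {set U}) : down J (up J O) = O ->
  [/\ down J (up J (capR2 I J O)) = capR2 I J O,
      box I (capR2 I J O) = box I O,
      capR2 I J O \subset O &
      forall Y, Y \in R2class I J O -> capR2 I J O \subset Y].
Proof.
move=> eO.
have OR : O \in R2class I J O by rewrite inE eO !eqxx.
have sub : capR2 I J O \subset O by rewrite /capR2 (bigcap_min O).
have [e1 e2] : down J (up J (capR2 I J O)) = capR2 I J O /\
               box I O \subset box I (capR2 I J O).
  rewrite /capR2; apply: (big_ind (fun X => down J (up J X) = X /\
               box I O \subset box I X)).
  - split; last by apply/subsetP=> a _; rewrite inE; apply/forallP=> x; rewrite inE implybT.
    apply/eqP; rewrite eqEsubset subsetT; exact: down_up_ext.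
  - move=> X Y [eX bX] [eY bY]; split; first exact: extI.
    apply/subsetP=> a aO; rewrite inE; apply/forallP=> x; apply/implyP=> Ixa.
    have := subsetP bX a aO; rewrite inE => /forallP /(_ x); rewrite Ixa /= => xX.
    have := subsetP bY a aO; rewrite inE => /forallP /(_ x); rewrite Ixa /= => xY.
    by rewrite inE xX xY.
  - by move=> Y; rewrite inE => /andP [/eqP -> /eqP ->].
split=> //.
- by apply/eqP; rewrite eqEsubset e2 box_mono.
- by move=> Y YR; rewrite /capR2 (bigcap_min Y).
Qed.

Definition canon (O : {set U}) : rule U M N :=
  (dia I (box I O), box I O, capR2 I J O, up J (capR2 I J O)).

Lemma canon_necessary (O : {set U}) : down J (up J O) = O -> O != setT ->
  dia I (box I O) != set0 -> necessary I J (canon O).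
Proof.
move=> eO OT Dn; have [e1 e2 e3 e4] := capR2_props O eO.
split.
- rewrite /canon /is_Irule; split; first by split; rewrite ?box_dia_box.
  split; first by split.
  split; first by rewrite galois e2.
  split=> //; apply/negP=> /eqP YT; move: e3; rewrite YT subTset => /eqP OT'.
  by rewrite OT' eqxx in OT.
- move=> [[[[O1 C1] Y1] D1] [[[bO1 dC1] [[uY1 dD1] [s1 [n1 t1]]]] neq imp]].
  move: imp; rewrite /canon /rule_implies => [[i1 [i2 i3]]].
  have eY1 : down J (up J Y1) = Y1 by rewrite uY1.
  have bY1 : box I O \subset box I Y1 by rewrite -galois (subset_trans i1).
  have Y1R : Y1 \in R2class I J O.
    rewrite inE eY1 eqxx /= eqEsubset bY1 andbT.
    by rewrite -e2 box_mono.
  have Y1e : Y1 = capR2 I J O by apply/eqP; rewrite eqEsubset i3 e4.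
  have O1e : O1 = dia I (box I O).
    apply/eqP; rewrite eqEsubset i1 andbT -dC1 dia_mono // -bO1 -e2 -Y1e.
    exact: box_mono.
  by apply: neq; rewrite -bO1 -uY1 O1e Y1e box_dia_box.
Qed.
End M.

Theorem theorem3p7 (U M N : finType) (I : U -> M -> bool) (J : U -> N -> bool) :
  canonical I -> canonical J ->
  forall r : rule U M N,
    necessary I J r <->
    exists O : {set U},
      [/\ is_extent J O, O != setT, dia I (box I O) != set0 &
          r = (dia I (box I O), box I O, capR2 I J O, up J (capR2 I J O))].
Proof.
move=> _ _ r; split.
- case: r => [[[O' C] Y] D] [[[bO dC] [[uY dD] [s [n t]]]] nex].
  have eY : down J (up J Y) = Y by rewrite uY.
  have sub : O' \subset dia I (box I Y).
    by rewrite -dC dia_mono // -bO box_mono.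
  have Dn : dia I (box I Y) != set0.
    apply/negP=> /eqP E; move: sub; rewrite E subset0 => /eqP E'.
    by rewrite E' eqxx in n.
  exists Y; split=> //; first by exists D; split.
  have [nc _] := canon_necessary _ _ _ I J Y eY t Dn.
  have [e1 e2 e3 e4] := capR2_props _ _ _ I J Y eY.
  case: (eqVneq (canon _ _ _ I J Y) (O', C, Y, D)) => [<- //|ne].
  exfalso; apply: nex; exists (canon _ _ _ I J Y); split=> //; first exact/eqP.
  rewrite /canon /rule_implies; split=> //; split=> //.
  by rewrite galois e2.
- move=> [O [[C [uO dC]] OT Dn ->]].
  apply: (canon_necessary _ _ _ I J) => //; by rewrite uO.
Qed.
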